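(* There is no constant $c\in(0,1)$ such that every finite group $G$ with $sd^*(G)>c$ is an Iwasawa group.
   Context: For a finite group $G$, $L(G)$ denotes the lattice of all subgroups of $G$. The subgroup commutativity degree of $G$ is $$sd(G)=\frac{1}{|L(G)|^2}\,\left|\{(H,K)\in L(G)^2 \mid HK=KH\}\right|.$$ Define $sd^*(G)=\min\{sd(S)\mid S \text{ is a section of } G\}$, where a section of $G$ is a quotient $H/N$ with $N\trianglelefteq H\le G$. An Iwasawa group is a finite nilpotent group whose subgroup lattice is modular. *)

(* Defs.v *)
From HB Require Import structures.
From mathcomp Require Import all_boot all_order all_algebra all_fingroup all_solvable.
From mathcomp Require Import reals.
Set Implicit Arguments. Unset Strict Implicit. Unset Printing Implicit Defensive.
Import Order.TTheory GRing.Theory Num.Theory.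

Local Open Scope group_scope.

Definition subgroup_lattice (gT : finGroupType) (G : {set gT}) : {set {group gT}} :=
  [set H : {group gT} | H \subset G].

Definition n_permuting_pairs (gT : finGroupType) (G : {set gT}) : nat :=
  #|[set HK : {group gT} * {group gT} |
      [&& HK.1 \subset G, HK.2 \subset G & (HK.1 * HK.2 == HK.2 * HK.1)%g]]|.

Definition sd (gT : finGroupType) (G : {set gT}) : rat :=
  ((n_permuting_pairs G)%:R / (#|subgroup_lattice G| ^ 2)%:R)%R.

(* sd^*(G) = min of sd(H/N) over sections H/N, N <| H <= G.
   (All values of sd lie in [0,1] and the trivial section exists, so the
   starting value 1 of the iterated minimum is harmless.) *)
Definition sdstar (gT : finGroupType) (G : {set gT}) : rat :=
  \big[Order.min/1%R]_(H : {group gT} | H \subset G)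
    \big[Order.min/1%R]_(N : {group gT} | N <| H) sd (H / N)%g.

Definition modular_subgroup_lattice (gT : finGroupType) (G : {set gT}) : bool :=
  [forall X : {group gT}, forall Y : {group gT}, forall Z : {group gT},
    [&& X \subset G, Y \subset G, Z \subset G & X \subset Z] ==>
    (X <*> (Y :&: Z) == (X <*> Y) :&: Z)].

Definition iwasawa (gT : finGroupType) (G : {set gT}) : bool :=
  nilpotent G && modular_subgroup_lattice G.

(* Main.v *)
Require Import Defs.
From HB Require Import structures.
From mathcomp Require Import all_boot all_order all_algebra all_fingroup all_solvable all_field.
From mathcomp Require Import reals.
From mathcomp Require Import ring lra zify.
Import Order.TTheory GRing.Theory Num.Theory.
Set Implicit Arguments. Unset Strict Implicit. Unset Printing Implicit Defensive.

Section Generic.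
Variable gT : finGroupType.

Definition nbad (X A : {set gT}) :=
  #|[set H : {group gT} | (H \subset X) && ~~ (H \subset A)]|.

Lemma perm_pairs_ge (X A : {group gT}) : A \subset X -> abelian A ->
  (#|subgroup_lattice X| - nbad X A) ^ 2 <= n_permuting_pairs X.
Proof.
move=> sAX abA.
set LA := [set H : {group gT} | H \subset A].
have eLA : #|LA| = #|subgroup_lattice X| - nbad X A.
  have e2 : nbad X A = #|subgroup_lattice X :\: LA|.
    by apply: eq_card => H; rewrite !inE andbC.
  rewrite -(cardsID LA (subgroup_lattice X)) e2 addnK.
  apply: eq_card => H; rewrite !inE.
  by case sHA: (H \subset A); rewrite ?andbT ?andbF // (subset_trans sHA sAX).
rewrite -eLA /n_permuting_pairs expnS expn1 -cardsX.
apply: subset_leq_card; apply/subsetP => [[H K]]; rewrite !inE /= => /andP[sHA sKA].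
rewrite (subset_trans sHA sAX) (subset_trans sKA sAX) /=.
apply/eqP; apply: normC; apply: cents_norm.
exact: subset_trans sHA (subset_trans abA (centS sKA)).
Qed.

Lemma sd_ge (X A : {group gT}) : A \subset X -> abelian A ->
  (1 - (2 * nbad X A)%:R / (#|subgroup_lattice X|)%:R <= sd X)%R.
Proof.
move=> sAX abA.
have l0 : (0 < #|subgroup_lattice X|)%N.
  by apply/card_gt0P; exists 1%G; rewrite inE sub1G.
have bl : (nbad X A <= #|subgroup_lattice X|)%N.
  apply: subset_leq_card; apply/subsetP => H; rewrite !inE => /andP[-> _] //.
have := perm_pairs_ge sAX abA.
rewrite /sd -(ler_nat rat) natrX natrB //.
set L := ((#|subgroup_lattice X|)%:R)%R; set B := ((nbad X A)%:R)%R; set n := ((n_permuting_pairs X)%:R)%R.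
move=> H.
have L0 : (0 < L :> rat)%R by rewrite ltr0n.
rewrite natrX -/L ler_pdivlMr ?exprn_gt0 //.
have -> : ((1 - (2 * nbad X A)%:R / L) * L ^+ 2 = L ^+ 2 - 2 * B * L :> rat)%R.
  rewrite natrM -/B; field; by rewrite lt0r_neq0.
apply: le_trans H; rewrite sqrrB; have := sqr_ge0 B.
lra.
Qed.

Lemma nbad_self (X : {group gT}) : nbad X X = 0.
Proof.
apply/eqP; rewrite cards_eq0; apply/eqP/setP => H; rewrite !inE.
by case: (H \subset X).
Qed.

Lemma sd_abelian_ge (X : {group gT}) : abelian X -> (1 <= sd X)%R.
Proof.
move=> abX; have := sd_ge (subxx X) abX; rewrite nbad_self muln0 mul0r subr0.
done.
Qed.

Lemma sdstar_ge (G : {group gT}) (beta : rat) : (beta <= 1)%R ->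
  (forall H N : {group gT}, H \subset G -> (N <| H)%g -> (beta <= sd (H / N)%g)%R) ->
  (beta <= sdstar G)%R.
Proof.
move=> b1 hyp; rewrite /sdstar.
apply: (big_ind (fun v => beta <= v)%R) => //.
  by move=> u v hu hv; rewrite le_min hu hv.
move=> H sHG.
apply: (big_ind (fun v => beta <= v)%R) => //.
  by move=> u v hu hv; rewrite le_min hu hv.
by move=> N nNH; apply: hyp.
Qed.

End Generic.

Lemma nbad_quo1 (gT : finGroupType) (G T : {group gT}) :
  (nbad (G / 1)%g (T / 1)%g <= nbad G T)%N.
Proof.
rewrite /nbad.
pose f := fun Y : {group coset_of (1%G : {group gT})} => (coset 1%G @*^-1 Y)%G.
rewrite -(card_in_imset (f := f)); last first.
  move=> Y1 Y2 hY1 hY2 e; apply: group_inj.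
  have e' : (coset 1%G @*^-1 Y1)%g = (coset 1%G @*^-1 Y2)%g by exact: (congr1 val e).
  by rewrite -(cosetpreK Y1) -(cosetpreK Y2) e'.
apply: subset_leq_card; apply/subsetP => _ /imsetP[Y hY ->]; move: hY; rewrite !inE => /andP[sY nY] /=.
apply/andP; split.
  by rewrite -(quotientGK (normal1 G)) cosetpreSK.
by apply: contra nY => sT; rewrite -(cosetpreK Y) quotientS.
Qed.

Lemma lat_quo1 (gT : finGroupType) (G : {group gT}) :
  (#|subgroup_lattice G| <= #|subgroup_lattice (G / 1)%g|)%N.
Proof.
pose f := fun Q : {group gT} => (Q / 1)%G.
rewrite -(card_in_imset (f := f)); last first.
  move=> Q1 Q2 hQ1 hQ2 e.
  have e' : (Q1 / 1%G)%g = (Q2 / 1%G)%g by exact: (congr1 val e).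
  apply: group_inj.
  by rewrite -(quotientGK (normal1 Q1)) e' quotientGK // normal1.
apply: subset_leq_card; apply/subsetP => _ /imsetP[Q hQ ->]; move: hQ; rewrite !inE => sQ /=.
by rewrite quotientS.
Qed.

Lemma arithR (R : realFieldType) (n b l : nat) : (0 < n)%N -> (0 < l)%N -> (2 * b * n <= 64 * l)%N ->
  (1 - 64%:R / n%:R <= 1 - (2 * b)%:R / l%:R :> R)%R.
Proof.
move=> n0 l0 h.
have n0' : (0 < n%:R :> R)%R by rewrite ltr0n.
have l0' : (0 < l%:R :> R)%R by rewrite ltr0n.
rewrite lerD2l lerN2 (ler_pdivrMr _ _ l0') mulrAC (ler_pdivlMr _ _ n0') -!natrM ler_nat.
exact: h.
Qed.
Lemma arith (n b l : nat) : (0 < n)%N -> (0 < l)%N -> (b <= n.+1)%N -> (n * n <= 16 * l)%N ->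
  (1 - 64%:R / n%:R <= 1 - (2 * b)%:R / l%:R :> rat)%R.
Proof.
move=> n0 l0 bn nl; apply: arithR => //.
nia.
Qed.

Section Constr.
Variables (F : finFieldType) (x : F) (p : nat).
Hypotheses (ch2 : 2 \in [pchar F]%R) (pr_p : prime p) (xp : (x ^+ p = 1)%R)
  (xo : forall i, 0 < i < p -> (x ^+ i != 1)%R).

Local Open Scope ring_scope.

Definition good (V : {set F}) : bool :=
  [&& 0 \in V, [forall a in V, [forall b in V, a + b \in V]] & [forall a in V, x * a \in V]].

Lemma goodP (V : {set F}) : reflect [/\ 0 \in V, (forall a b, a \in V -> b \in V -> a + b \in V)
   & (forall a, a \in V -> x * a \in V)] (good V).
Proof.
apply: (iffP and3P) => [[h0 /forall_inP hD /forall_inP hX]|[h0 hD hX]]; split => //.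
- by move=> a b aV bV; have /forall_inP := hD a aV; apply.
- by apply/forall_inP => a aV; apply/forall_inP => b bV; apply: hD.
- by apply/forall_inP.
Qed.

Definition K : {set F} := \bigcap_(V : {set F} | good V && (1 \in V)) V.

Lemma K_min (V : {set F}) : good V -> 1 \in V -> K \subset V.
Proof. by move=> gV V1; apply: bigcap_inf; rewrite gV V1. Qed.

Lemma K1 : 1 \in K.
Proof. by apply/bigcapP => V /andP[]. Qed.

Lemma K0 : 0 \in K.
Proof. by apply/bigcapP => V /andP[/goodP[]]. Qed.

Lemma KD a b : a \in K -> b \in K -> a + b \in K.
Proof.
move=> /bigcapP aK /bigcapP bK; apply/bigcapP => V /[dup] /andP[/goodP[_ hD _] _] PV.
by apply: hD; [apply: aK | apply: bK].
Qed.

Lemma KxM a : a \in K -> x * a \in K.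
Proof.
move=> /bigcapP aK; apply/bigcapP => V /[dup] /andP[/goodP[_ _ hX] _] PV.
by apply: hX; apply: aK.
Qed.

Lemma KXM i a : a \in K -> x ^+ i * a \in K.
Proof.
elim: i => [|i IH] aK; first by rewrite mul1r.
by rewrite exprS -mulrA KxM // IH.
Qed.

Lemma KX i : x ^+ i \in K.
Proof. by rewrite -[x ^+ i]mulr1 KXM // K1. Qed.

Lemma KM a b : a \in K -> b \in K -> a * b \in K.
Proof.
move=> aK bK.
have : K \subset [set y | y * b \in K].
  apply: K_min; last by rewrite inE mul1r.
  apply/goodP; split.
  - by rewrite inE mul0r K0.
  - by move=> u v; rewrite !inE mulrDl; apply: KD.
  - by move=> u; rewrite !inE -mulrA; apply: KxM.
by move/subsetP/(_ a aK); rewrite inE.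
Qed.

Lemma p_gt1 : (1 < p)%N. Proof. exact: prime_gt1. Qed.
Lemma p_gt0 : (0 < p)%N. Proof. exact: prime_gt0. Qed.

Lemma x_modp n : x ^+ n = x ^+ (n %% p).
Proof. by rewrite {1}(divn_eq n p) exprD mulnC exprM xp expr1n mul1r. Qed.

Lemma x_neq0 : x != 0.
Proof.
apply/eqP => x0; move: xp; rewrite x0 expr0n.
by have := p_gt0; case: p => // n _ /eqP; rewrite eq_sym oner_eq0.
Qed.

Lemma xinv i : ~~ (p %| i)%N -> x ^+ i ^+ (i ^ p.-2)%N = x.
Proof.
move=> npi.
have cop : coprime i p by rewrite coprime_sym prime_coprime.
have := Euler_exp_totient cop; rewrite totient_prime //.
rewrite -exprM x_modp.
have -> : p.-1 = (p.-2).+1 by have := p_gt1; case: p => [|[|n]].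
by rewrite expnS => ->; rewrite modn_small ?p_gt1 // expr1.
Qed.

Lemma x_eq1 i : (x ^+ i == 1) = (p %| i)%N.
Proof.
rewrite x_modp /dvdn.
case: (posnP (i %% p)) => [->|h]; first by rewrite expr0 !eqxx.
rewrite (negPf (xo _)); last by rewrite h ltn_pmod // p_gt0.
by [].
Qed.

Lemma K_irr (W : {set F}) i v : W \subset K -> 0 \in W ->
  (forall a b, a \in W -> b \in W -> a + b \in W) ->
  (forall a, a \in W -> x ^+ i * a \in W) -> ~~ (p %| i)%N ->
  v \in W -> v != 0 -> K \subset W.
Proof.
move=> sWK W0 WD WX npi vW v0.
have WxM a : a \in W -> x * a \in W.
  move=> aW; rewrite -{1}(xinv npi).
  elim: (i ^ p.-2)%N => [|k IH]; first by rewrite expr0 mul1r.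
  by rewrite exprS -mulrA WX.
have sKW : K \subset [set y | y * v \in W].
  apply: K_min; last by rewrite inE mul1r.
  apply/goodP; split.
  - by rewrite inE mul0r.
  - by move=> a b; rewrite !inE mulrDl; apply: WD.
  - by move=> a; rewrite !inE -mulrA; apply: WxM.
have vK : v \in K by apply: (subsetP sWK).
have eK : [set y * v | y in K] = K.
  apply/eqP; rewrite eqEcard card_imset; last exact: (mulIf v0).
  rewrite leqnn andbT; apply/subsetP => _ /imsetP[y yK ->]; exact: KM.
rewrite -eK; apply/subsetP => _ /imsetP[y yK ->].
by have := subsetP sKW y yK; rewrite inE.
Qed.

Lemma card_K : (p.+1 <= #|K|)%N.
Proof.
have sub : 0 |: [set x ^+ (val i) | i : 'I_p] \subset K.
  apply/subsetP => y; rewrite !inE => /orP[/eqP->|/imsetP[i _ ->]]; [exact: K0|exact: KX].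
apply: leq_trans (subset_leq_card sub).
rewrite cardsU1 card_imset ?card_ord.
  suff -> : 0 \notin [set x ^+ \val i | i : 'I_p] by [].
  apply/imsetP => [[i _ /eqP]]; rewrite eq_sym expf_eq0 (negPf x_neq0) andbF.
  by [].
move=> i j /eqP eij; apply/val_inj/eqP.
wlog lij : i j eij / (val i <= val j)%N.
  move=> W; case: (leqP i j) => h; first exact: W.
  by rewrite eq_sym; apply: W => //; [rewrite eq_sym | apply: ltnW].
rewrite eqn_leq lij /=; rewrite leqNgt; apply/negP => ltij.
have := xo (i := (val j - val i)%N); rewrite subn_gt0 ltij /=.
have -> : (val j - val i < p)%N by apply: leq_ltn_trans (leq_subr _ _) (ltn_ord j).
move=> /(_ isT); rewrite -(inj_eq (mulfI (expf_neq0 (val i) x_neq0))) -exprD subnKC ?(ltnW ltij) //.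
by rewrite mulr1 eq_sym eij.
Qed.


Implicit Types s t : {perm F}.

Definition lin (s : {perm F}) : F := s 1 - s 0.
Definition affine (s : {perm F}) := [forall y, s y == lin s * y + s 0].
Definition inG (s : {perm F}) := [&& s 0 \in K, [exists i : 'I_p, lin s == x ^+ i] & affine s].
Definition Gset := [set s | inG s].

Lemma affineP s : reflect (forall y, s y = lin s * y + s 0) (affine s).
Proof. by apply: (iffP forallP) => h y; apply/eqP. Qed.

Lemma mulaff s t : affine s -> affine t ->
  forall y, (s * t)%g y = lin t * lin s * y + (lin t * s 0 + t 0).
Proof.
move=> /affineP hs /affineP ht y; rewrite permM ht hs; ring.
Qed.

Lemma lin_mulA s t : affine s -> affine t -> lin (s * t)%g = lin t * lin s.
Proof. by move=> hs ht; have := mulaff hs ht; rewrite /lin => h; rewrite !h; ring. Qed.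


Lemma zero_mulA s t : affine s -> affine t -> (s * t)%g 0 = lin t * s 0 + t 0 :> F.
Proof. by move=> hs ht; rewrite (mulaff hs ht); ring. Qed.

Lemma affine_mul s t : affine s -> affine t -> affine (s * t)%g.
Proof.
move=> hs ht; apply/affineP => y.
by rewrite (lin_mulA hs ht) (zero_mulA hs ht) (mulaff hs ht).
Qed.

Lemma lin1 : lin 1%g = 1.
Proof. by rewrite /lin !perm1 subr0. Qed.

Lemma affine1 : affine 1%g.
Proof. by apply/affineP => y; rewrite lin1 !perm1 mul1r addr0. Qed.

Lemma Gset_group : group_set Gset.
Proof.
apply/group_setP; split.
  rewrite inE /inG perm1 K0 affine1 andbT /=.
  by apply/existsP; exists (Ordinal p_gt0); rewrite lin1 expr0.
move=> s t; rewrite !inE => /and3P[s0 /existsP[i /eqP si] hs] /and3P[t0 /existsP[j /eqP tj] ht].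
rewrite /inG affine_mul // (zero_mulA hs ht) (lin_mulA hs ht) tj KD ?KXM //= andbT.
apply/existsP; exists (Ordinal (ltn_pmod (j + i) p_gt0)).
by rewrite si -exprD -x_modp.
Qed.

Definition G : {group {perm F}} := Group Gset_group.

Lemma memG s : (s \in G) = inG s.
Proof. by rewrite inE. Qed.

Lemma affG s : s \in G -> forall y, s y = lin s * y + s 0.
Proof. by rewrite memG => /and3P[_ _ /affineP]. Qed.

Lemma affineG s : s \in G -> affine s.
Proof. by rewrite memG => /and3P[]. Qed.

Lemma linG s : s \in G -> exists i : 'I_p, lin s = x ^+ i.
Proof. by rewrite memG => /and3P[_ /existsP[i /eqP ->] _]; exists i. Qed.

Lemma zeroG s : s \in G -> s 0 \in K.
Proof. by rewrite memG => /and3P[]. Qed.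

Lemma lin_mul s t : s \in G -> t \in G -> lin (s * t)%g = lin s * lin t.
Proof. by move=> sG tG; rewrite lin_mulA ?affineG // mulrC. Qed.

Lemma zero_mulG s t : s \in G -> t \in G -> (s * t)%g 0 = lin t * s 0 + t 0 :> F.
Proof. by move=> sG tG; rewrite zero_mulA ?affineG. Qed.

Lemma lin_neq0 s : s \in G -> lin s != 0.
Proof. by move/linG=> [i ->]; apply: expf_neq0; exact: x_neq0. Qed.

Lemma lin_inv s : s \in G -> lin (s^-1)%g = (lin s)^-1.
Proof.
move=> sG; have := lin_mul sG (groupVr sG); rewrite mulgV lin1 => h.
by apply: (mulfI (lin_neq0 sG)); rewrite -h mulfV // lin_neq0.
Qed.

Lemma lin_exp s k : s \in G -> lin (s ^+ k)%g = lin s ^+ k.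
Proof.
move=> sG; elim: k => [|k IH]; first by rewrite expg0 expr0 lin1.
by rewrite expgS lin_mul ?groupX // IH exprS.
Qed.

Lemma eqG s t : s \in G -> t \in G -> lin s = lin t -> s 0 = t 0 -> s = t.
Proof.
move=> sG tG el e0; apply/permP => y.
by rewrite (affG sG) (affG tG) el e0.
Qed.

Definition Tset := [set s in G | lin s == 1].

Lemma Tset_group : group_set Tset.
Proof.
apply/group_setP; split; first by apply/setIdP; rewrite group1 lin1.
move=> s t /setIdP[sG /eqP s1] /setIdP[tG /eqP t1]; apply/setIdP; split.
  exact: groupM.
by rewrite lin_mul // s1 t1 mulr1.
Qed.

Definition T : {group {perm F}} := Group Tset_group.

Lemma memT s : (s \in T) = (s \in G) && (lin s == 1).
Proof. by rewrite inE. Qed.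

Lemma sTG : T \subset G.
Proof. by apply/subsetP => s; rewrite memT => /andP[]. Qed.

Definition tr (a : F) : {perm F} := perm (@addIr F a).
Definition mu : {perm F} := perm (mulfI x_neq0).

Lemma trE a y : tr a y = y + a.
Proof. by rewrite permE. Qed.

Lemma muE y : mu y = x * y.
Proof. by rewrite permE. Qed.

Lemma lin_tr a : lin (tr a) = 1.
Proof. by rewrite /lin !trE add0r addrK. Qed.

Lemma tr_affine a : affine (tr a).
Proof. by apply/affineP => y; rewrite lin_tr !trE add0r mul1r. Qed.

Lemma trG a : (tr a \in G) = (a \in K).
Proof.
rewrite memG /inG tr_affine trE add0r andbT.
case: (a \in K) => //=; apply/existsP; exists (Ordinal p_gt0).
by rewrite lin_tr expr0.
Qed.

Lemma trT a : (tr a \in T) = (a \in K).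
Proof. by rewrite memT trG lin_tr eqxx andbT. Qed.

Lemma trM a b : (tr a * tr b)%g = tr (a + b).
Proof. by apply/permP => y; rewrite permM !trE addrA. Qed.

Lemma tr0 : tr 0 = 1%g.
Proof. by apply/permP => y; rewrite trE perm1 addr0. Qed.

Lemma tr_inj : injective tr.
Proof. by move=> a b /permP /(_ 0); rewrite !trE !add0r. Qed.

Lemma T_tr s : s \in T -> s = tr (s 0).
Proof.
rewrite memT => /andP[sG /eqP s1]; apply/permP => y.
by rewrite (affG sG) s1 mul1r trE.
Qed.

Lemma lin_mu : lin mu = x.
Proof. by rewrite /lin !muE mulr1 mulr0 subr0. Qed.

Lemma muG : mu \in G.
Proof.
rewrite memG /inG muE mulr0 K0 /=; apply/andP; split.
  by apply/existsP; exists (Ordinal p_gt1); rewrite lin_mu expr1.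
by apply/affineP => y; rewrite lin_mu !muE mulr0 addr0.
Qed.

Lemma x_neq1 : x != 1.
Proof. by have := xo (i := 1); rewrite expr1 p_gt1; apply. Qed.

Lemma muNT : mu \notin T.
Proof. by rewrite memT lin_mu (negPf x_neq1) andbF. Qed.

Lemma conj_tr s a : s \in G -> (tr a ^ s)%g = tr (lin s * a).
Proof.
move=> sG; apply/permP => y.
rewrite /conjg !permM trE (affG sG (_ + a)) mulrDr addrAC -(affG sG) permKV.
by rewrite trE.
Qed.

Lemma T_abelian : abelian T.
Proof.
apply/centsP => s sT t tT; rewrite /commute (T_tr sT) (T_tr tT) !trM.
by rewrite addrC.
Qed.

Lemma T_normal : (T <| G)%g.
Proof.
rewrite /normal sTG /=; apply/subsetP => s sG; rewrite inE.
apply/subsetP => _ /imsetP[t tT ->]; rewrite (T_tr tT) conj_tr // trT.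
by rewrite KM // ?zeroG ?(subsetP sTG) //; case: (linG sG) => i ->; apply: KX.
Qed.


Lemma normsg (A B : {set {perm F}}) g : g \in 'N(A)%g -> g \in 'N(B)%g -> g \in 'N(A :&: B)%g.
Proof.
move=> gA gB; rewrite -sub1set; apply: normsI; by rewrite sub1set.
Qed.

Lemma linX s : s \in G -> s \notin T -> exists2 i : nat, lin s = x ^+ i & ~~ (p %| i)%N.
Proof.
move=> sG; rewrite memT sG /= => ns1; have [i ei] := linG sG.
by exists i => //; rewrite -x_eq1 -ei.
Qed.

Lemma get_x g : g \in G -> g \notin T -> exists k, lin (g ^+ k)%g = x.
Proof.
move=> gG gT; have [i ei npi] := linX gG gT.
by exists (i ^ p.-2)%N; rewrite lin_exp // ei xinv.
Qed.

Lemma irrT (V : {group {perm F}}) g : V \subset T -> g \in G -> g \notin T ->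
  g \in 'N(V)%g -> (V :==: 1%g) || (T \subset V).
Proof.
move=> sVT gG gT nVg.
case: (boolP (V :==: 1%g)) => [//|nV1] /=.
set W := [set a | tr a \in V].
have sWK : W \subset K.
  by apply/subsetP => a; rewrite inE => /(subsetP sVT); rewrite trT.
have W0 : 0 \in W by rewrite inE tr0 group1.
have WD a b : a \in W -> b \in W -> a + b \in W.
  by rewrite !inE -trM; apply: groupM.
have [i ei npi] := linX gG gT.
have WX a : a \in W -> x ^+ i * a \in W.
  by rewrite !inE -ei -conj_tr // memJ_norm.
have [v vV v1] := trivgPn _ nV1.
have vT := subsetP sVT v vV.
have ev := T_tr vT.
have v0 : v 0 != 0 by apply: contra v1 => /eqP e; rewrite ev e tr0.
have v0W : v 0 \in W by rewrite inE -ev.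
have sKW := K_irr sWK W0 WD WX npi v0W v0.
apply/subsetP => t tT; rewrite (T_tr tT).
have : t 0 \in W by apply: (subsetP sKW); rewrite -trT -T_tr.
by rewrite inE.
Qed.

Lemma gen_G (H : {group {perm F}}) g : H \subset G -> g \in H -> g \notin T ->
  T \subset H -> (H :=: G)%g.
Proof.
move=> sHG gH gT sTH; have gG := subsetP sHG g gH.
have [k ek] := get_x gG gT.
apply/eqP; rewrite eqEsubset sHG /=; apply/subsetP => s sG.
have [i ei] := linG sG.
set h := ((g ^+ k) ^+ i)%g.
have hH : h \in H by rewrite groupX // groupX.
have hG : h \in G by apply: (subsetP sHG).
have uT : (s * h^-1)%g \in T.
  rewrite memT groupM ?groupV //= lin_mul ?groupV // lin_inv // lin_exp ?groupX //.
  by rewrite ek ei mulfV // expf_neq0 // x_neq0.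
by rewrite -(mulgKV h s) groupM // (subsetP sTH).
Qed.

Lemma sub_cases (H : {group {perm F}}) : H \subset G -> ~~ (H \subset T) ->
  (H :=: G)%g \/ (H :&: T = 1)%g.
Proof.
move=> sHG /subsetPn[g gH gT]; have gG := subsetP sHG g gH.
have nV : g \in 'N(H :&: T)%g.
  apply: normsg; first exact: (subsetP (normG H)).
  exact: (subsetP (normal_norm T_normal)).
case/orP: (irrT (V := (H :&: T)%G) (subsetIr _ _) gG gT nV) => [/eqP ->|sT]; first by right.
left; apply: (gen_G sHG gH gT); exact: subset_trans sT (subsetIl _ _).
Qed.

Lemma abelian_HT (H : {group {perm F}}) : H \subset G -> (H :&: T = 1)%g -> abelian H.
Proof.
move=> sHG HT1; apply/centsP => h1 h1H h2 h2H.
have h1G := subsetP sHG h1 h1H; have h2G := subsetP sHG h2 h2H.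
apply/eqP; rewrite eq_mulgV1.
have : ((h1 * h2) * (h2 * h1)^-1)%g \in (H :&: T)%g.
  rewrite inE; apply/andP; split; first by rewrite !(groupM, groupV).
  rewrite memT !(groupM, groupV) //= lin_mul ?(groupM, groupV) // lin_inv ?groupM //.
  rewrite !lin_mul // (mulrC (lin h2)) mulfV // mulf_neq0 // lin_neq0 //.
by rewrite HT1 inE.
Qed.

Lemma nbadG : (nbad G T <= #|K|.+1)%N.
Proof.
rewrite /nbad.
set S := [set <[(mu * tr a)%g]>%G | a in K].
apply: leq_trans (_ : (#|G%G |: S| <= _)%N); last first.
  by rewrite cardsU1 -add1n leq_add ?leq_b1 // leq_imset_card.
apply: subset_leq_card; apply/subsetP => H; rewrite inE => /andP[sHG nHT].
rewrite !inE; case: (sub_cases sHG nHT) => [eHG | eHT].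
  by apply/orP; left; apply/eqP; apply: group_inj.
apply/orP; right.
have [g gH gT] := subsetPn nHT; have gG := subsetP sHG g gH.
have [k ek] := get_x gG gT.
set e := (g ^+ k)%g.
have eH : e \in H by rewrite groupX.
have eG : e \in G by rewrite groupX.
have ee : e = (mu * tr (e 0))%g.
  apply: eqG => //; first by rewrite groupM ?muG // trG zeroG.
    by rewrite lin_mul ?muG // ?trG ?zeroG // lin_mu lin_tr mulr1.
  by rewrite zero_mulG ?muG // ?trG ?zeroG // lin_tr muE mulr0 mul1r trE !add0r.
apply/imsetP; exists (e 0); first exact: zeroG.
rewrite -ee; apply: group_inj => /=; apply/eqP; rewrite eqEsubset cycle_subG eH andbT.
apply/subsetP => h hH; have hG := subsetP sHG h hH.
have [i ei] := linG hG.
have : (h * (e ^+ i)^-1)%g \in (H :&: T)%g.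
  rewrite inE; apply/andP; split; first by rewrite !(groupM, groupV, groupX).
  rewrite memT !(groupM, groupV, groupX) //=.
  rewrite lin_mul ?(groupV, groupX) // lin_inv ?groupX // lin_exp // ek ei mulfV //.
  by rewrite expf_neq0 // x_neq0.
rewrite eHT inE -eq_mulgV1 => /eqP ->; exact: mem_cycle.
Qed.



Definition sel (c : bool) (a : F) := if c then a else 0.
Definition Sab a b := [set sel ij.1 a + sel ij.2 b | ij : bool * bool].

Lemma sel_add c d a : sel c a + sel d a = sel (c (+) d) a.
Proof. by case: c; case: d; rewrite /sel ?addr0 ?add0r ?(addrr_pchar2 ch2). Qed.

Lemma SabD a b u v : u \in Sab a b -> v \in Sab a b -> u + v \in Sab a b.
Proof.
move=> /imsetP[[c1 c2] _ ->] /imsetP[[d1 d2] _ ->] /=.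
rewrite addrACA !sel_add; apply/imsetP; by exists (c1 (+) d1, c2 (+) d2).
Qed.

Lemma Sab0 a b : 0 \in Sab a b.
Proof. by apply/imsetP; exists (false, false) => //=; rewrite /sel addr0. Qed.

Definition Vset a b := [set tr u | u in Sab a b].

Lemma Vset_group a b : group_set (Vset a b).
Proof.
apply/group_setP; split; first by apply/imsetP; exists 0; rewrite ?tr0 ?Sab0.
move=> _ _ /imsetP[u uS ->] /imsetP[v vS ->]; rewrite trM.
by apply/imsetP; exists (u + v); rewrite ?SabD.
Qed.

Definition Vg a b : {group {perm F}} := Group (Vset_group a b).

Lemma card_Vg a b : (#|Vg a b| <= 4)%N.
Proof.
apply: leq_trans (leq_imset_card _ _) _.
apply: leq_trans (leq_imset_card _ _) _.
by rewrite card_prod card_bool.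
Qed.

Lemma Vg_sub a b : a \in K -> b \in K -> Vg a b \subset G.
Proof.
move=> aK bK; apply/subsetP => _ /imsetP[_ /imsetP[[c d] _ ->] ->].
by rewrite trG KD //= /sel; [case: c | case: d]; rewrite ?K0.
Qed.

Lemma tra_in a b : tr a \in Vg a b.
Proof. by apply/imsetP; exists a => //; apply/imsetP; exists (true, false) => //; rewrite /sel /= addr0. Qed.

Lemma trb_in a b : tr b \in Vg a b.
Proof. by apply/imsetP; exists b => //; apply/imsetP; exists (false, true) => //; rewrite /sel /= add0r. Qed.

Lemma card_L : (#|K| * #|K| <= 16 * #|subgroup_lattice G|)%N.
Proof.
rewrite -cardsX -sum1_card.
rewrite (partition_big (fun ab => Vg ab.1 ab.2) (mem (subgroup_lattice G))) /=; last first.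
  by move=> [a b]; rewrite inE => /andP[aK bK]; rewrite inE Vg_sub.
rewrite mulnC -sum_nat_const; apply: leq_sum => V _.
rewrite -big_filter.
set s := filter _ _.
rewrite big_filter sum1_card.
case: (pickP [pred ab : F * F | (ab \in setX K K) && (Vg ab.1 ab.2 == V)]) => [ab0 /= /andP[_ /eqP eV] | none]; last first.
  by rewrite (eq_card0 none).
have cV : (#|tr @^-1: V| <= 4)%N.
  rewrite -(card_imset _ tr_inj); apply: leq_trans (card_Vg ab0.1 ab0.2).
  by rewrite eV; apply: subset_leq_card; apply/subsetP => _ /imsetP[a aV ->]; rewrite inE in aV.
apply: leq_trans (_ : (#|setX (tr @^-1: V) (tr @^-1: V)| <= _)%N); last first.
  by rewrite cardsX (leq_mul cV cV).
apply: subset_leq_card; apply/subsetP => [[a b]]; rewrite !inE /= => /andP[_ /eqP <-].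
by rewrite tra_in trb_in.
Qed.

Lemma Z_G : ('Z(G) = 1)%g.
Proof.
apply/trivgP; apply/subsetP => z /centerP[zG cz]; rewrite inE.
have t1G : tr 1 \in G by rewrite trG K1.
have mz : commute z mu by apply: cz; exact: muG.
have tz : commute z (tr 1) by apply: cz; exact: t1G.
have lz : lin z = 1.
  move/permP: tz => /(_ 0); rewrite !permM !trE add0r (affG zG 1) mulr1.
  by rewrite (addrC (lin z)) => /eqP; rewrite (inj_eq (addrI _)) eq_sym => /eqP.
have zT : z \in T by rewrite memT zG lz eqxx.
move/permP: mz => /(_ 0); rewrite !permM !muE mulr0 => /eqP.
rewrite -subr_eq0 -{2}(mul1r (z 0)) -mulrBl mulf_eq0 subr_eq0 (negPf x_neq1) /= => /eqP z00.
by rewrite (T_tr zT) z00 tr0.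
Qed.

Lemma G_not_nil : ~~ nilpotent G.
Proof.
apply/negP => nG; have := center_nil_eq1 nG; rewrite Z_G eqxx => /esym /eqP G1.
have := muG; rewrite G1 inE => /eqP m1.
by have := lin_mu; rewrite m1 lin1 => /esym/eqP; rewrite (negPf x_neq1).
Qed.

Lemma der1_T : (G^`(1) \subset T)%g.
Proof.
rewrite derg1 gen_subG; apply/subsetP => _ /imset2P[s t sG tG ->].
have sV := groupVr sG; have tV := groupVr tG.
rewrite memT groupR //= /commg /conjg !lin_mul ?(groupM, groupV) // !lin_inv //.
have := lin_neq0 sG; have := lin_neq0 tG => h1 h2.
by rewrite mulrCA mulKf // mulVf.
Qed.

Lemma trV_eval b y : (tr b)^-1%g y = y - b.
Proof. by have := permKV (tr b) y; rewrite trE => h; rewrite -{2}h addrK. Qed.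

Lemma sections (H N : {group {perm F}}) : H \subset G -> (N <| H)%g ->
  abelian (H / N)%g \/ (H :=: G /\ N :=: 1)%g.
Proof.
move=> sHG nNH.
case sHT: (H \subset T).
  by left; apply: quotient_abelian; exact: abelianS sHT T_abelian.
case: (sub_cases sHG (negbT sHT)) => [eHG | eHT]; last first.
  by left; apply: quotient_abelian; exact: abelian_HT.
rewrite eHG in nNH *.
have nV : mu \in 'N(N :&: T)%g.
  apply: normsg; first exact: (subsetP (normal_norm nNH)) _ muG.
  exact: (subsetP (normal_norm T_normal)) _ muG.
case/orP: (irrT (V := (N :&: T)%G) (subsetIr _ _) muG muNT nV) => [/eqP NT1|sT]; last first.
  left; apply: sub_der1_abelian; apply: subset_trans der1_T _.
  exact: subset_trans sT (subsetIl _ _).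
case sNT: (N \subset T).
  by right; split => //; rewrite -NT1; apply/esym/setIidPl.
exfalso; have [g gN gT] := subsetPn (negbT sNT).
have sNG := normal_sub nNH.
have gG := subsetP sNG g gN.
have t1G : tr 1 \in G by rewrite trG K1.
have uN : ([~ g, tr 1%R])%g \in N.
  by rewrite commgEl groupM ?groupV // memJ_norm // (subsetP (normal_norm nNH) _ t1G).
have uG := subsetP sNG _ uN.
have uT : ([~ g, tr 1%R])%g \in T.
  rewrite memT uG /= /commg /conjg !lin_mul ?(groupM, groupV) // !lin_inv // lin_tr.
  by rewrite invr1 mul1r mulr1 mulVf // lin_neq0.
have : ([~ g, tr 1%R])%g \in (N :&: T)%g by rewrite inE uN uT.
rewrite NT1 inE => /conjg_fixP /permP /(_ 0).
rewrite /conjg !permM trV_eval trE (affG gG (0 - 1)) sub0r mulrN1 => /eqP.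
rewrite addrAC -subr_eq0 addrK addrC subr_eq0 eq_sym => lg.
by move: gT; rewrite memT gG lg.
Qed.



Lemma sdstar_bound : (1 - 64%:R / (#|K|)%:R <= sdstar G)%R.
Proof.
have b1 : (1 - 64%:R / (#|K|)%:R <= 1 :> rat)%R.
  by rewrite lerBlDr lerDl divr_ge0 ?ler0n.
apply: (sdstar_ge b1) => H N sHG nNH.
case: (sections sHG nNH) => [ab | [eHG eN1]].
  exact: le_trans b1 (sd_abelian_ge (X := (H / N)%G) ab).
have eH : H = G := group_inj eHG.
have eN : N = 1%G := group_inj eN1.
subst H N.
have := sd_ge (X := (G / 1)%G) (A := (T / 1)%G) (quotientS _ sTG) (quotient_abelian _ T_abelian).
apply: le_trans; apply: arith.
- by apply: leq_trans card_K.
- by apply/card_gt0P; exists 1%G; rewrite inE sub1G.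
- exact: leq_trans (nbad_quo1 G T) nbadG.
- by apply: leq_trans card_L _; rewrite leq_mul2l lat_quo1 orbT.
Qed.
End Constr.

Local Open Scope ring_scope.

Theorem theorem3 (R : realType) :
  ~ (exists c : R, 0 < c < 1 /\
      forall (gT : finGroupType) (G : {group gT}),
        c < ratr (sdstar G) -> iwasawa G).
Proof.
case=> c [/andP[c0 c1] hyp].
set M := Num.Def.archi_bound (64 / (1 - c)).
have c1' : 0 < 1 - c by rewrite subr_gt0.
have hM : 64 / (1 - c) < M%:R by apply: archi_boundP; rewrite divr_ge0 // ltW.
have [p Mp pr] := prime_above (maxn M 2).
have p2 : (2 < p)%N by apply: leq_ltn_trans Mp; rewrite leq_maxr.
have pM : (M < p)%N by apply: leq_ltn_trans Mp; rewrite leq_maxl.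
have k0 : (0 < p.-1)%N by move: p2; case: (p) => [|[|[|]]].
have [Fd ch cardF] := pPrimePowerField (p:=2) (k:=p.-1) isT k0.
have cop : coprime 2 p.
  rewrite coprime_sym prime_coprime //; apply/negP => /(@dvdn_leq p 2 isT).
  by rewrite leqNgt p2.
have dv : (p %| #|[set: {unit Fd}]|)%N.
  rewrite card_finField_unit cardF -subn1 -eqn_mod_dvd ?expn_gt0 //.
  by apply/eqP; have := Euler_exp_totient cop; rewrite totient_prime.
have [u _ ou] := Cauchy pr dv.
pose x : Fd := val u.
have xp : x ^+ p = 1 by rewrite /x -FinRing.val_unitX -ou expg_order FinRing.val_unit1.
have xo : forall i, (0 < i < p)%N -> x ^+ i != 1.
  move=> i /andP[i0 ip]; apply/negP => /eqP h.
  have : (u ^+ i)%g == 1%g by rewrite -(inj_eq val_inj) FinRing.val_unitX FinRing.val_unit1 -/x h.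
  rewrite -order_dvdn ou => /(@dvdn_leq p i i0); by rewrite leqNgt ip.
have hb := sdstar_bound ch pr xp xo.
have nM : (M < #|K x|)%N by apply: leq_trans (card_K pr xp xo); apply: ltnW.
suff hc : c < ratr (sdstar (G pr xp)).
  have := hyp _ _ hc; rewrite /iwasawa => /andP[nG _].
  by have := G_not_nil pr xp xo; rewrite nG.
apply: (@lt_le_trans _ _ (ratr (1 - 64%:R / (#|K x|)%:R : rat))); last by rewrite ler_rat.
rewrite rmorphB rmorph1 fmorph_div !rmorph_nat.
set n := #|K x|.
have n0 : 0 < n%:R :> R by rewrite ltr0n; apply: leq_ltn_trans nM.
have h1 : 64 / (1 - c) < n%:R by apply: lt_trans hM _; rewrite ltr_nat.
have h2 : 64 / n%:R < 1 - c.
  by rewrite ltr_pdivrMr // mulrC -ltr_pdivrMr.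
lra.
Qed.
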